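(* Let $\mathcal C$ be a Clifford circuit with linear outcome code $\mathcal O(\mathcal C)$. For every $u\in\mathcal O(\mathcal C)^\perp$, $\overleftarrow{F(u)}=\overrightarrow{F'(u)}$, where $F'(u)=\prod_{j=1}^m\eta_{\ell_j+0.5}(S_j^{u_j})$.
   Context: A Clifford circuit on $n$ qubits is a finite sequence of operations, each a unitary Clifford gate or the measurement of a Hermitian $n$-qubit Pauli, each with a level in $\{1,2,\dots\}$; operations of equal level have disjoint supports and levels are nondecreasing; depth $\Delta$ = maximal level. In circuit order the $j$-th measurement measures $S_j$ at level $\ell_j$ ($j=1,\dots,m$); outcome $o_j=0$ for eigenvalue $+1$, $1$ for $-1$. The outcome code $\mathcal O(\mathcal C)\subseteq\mathbb Z_2^m$ is the set of outcome bit-strings occurring with nonzero probability for some input state; $\perp$ refers to $(u|v)=\sum u_iv_i\bmod2$. $\overline{\mathcal P}_N$ is the $N$-qubit Pauli group modulo phases. $U_\ell$ is the product of unitary gates of level $\ell$ (identity if none). Fault operators $F\in\overline{\mathcal P}_{n(\Delta+1)}$ act on qubits $(\ell+0.5,q)$, $0\le\ell\le\Delta$, $1\le q\le n$, with level components $F_{\ell+0.5}$; $\eta_{\ell+0.5}(P)$ is $P$ at level $\ell+0.5$ and $I$ elsewhere. Cumulant $\overrightarrow F$: start with $F$; for $\ell=1,\dots,\Delta$ replace $\overrightarrow F_{\ell+0.5}$ by $\overrightarrow F_{\ell+0.5}\cdot U_\ell\overrightarrow F_{\ell-0.5}U_\ell^{-1}$. Back-cumulant $\overleftarrow F$: start with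 $F$; for $\ell=\Delta,\dots,1$ replace $\overleftarrow F_{\ell-0.5}$ by $\overleftarrow F_{\ell-0.5}\cdot U_\ell^{-1}\overleftarrow F_{\ell+0.5}U_\ell$. $F(u)=\prod_j\eta_{\ell_j-0.5}(S_j^{u_j})$. *)

(* Defs.v *)
From HB Require Import structures.
From mathcomp Require Import all_boot all_order all_algebra.
Set Implicit Arguments. Unset Strict Implicit. Unset Printing Implicit Defensive.
Import Order.TTheory GRing.Theory Num.Theory.
Local Open Scope ring_scope.

(* A single-qubit Pauli mod phase is (x,z): (0,0)=I, (1,0)=X, (0,1)=Z, (1,1)=Y. *)
Definition pauli (n : nat) := {ffun 'I_n -> bool * bool}.

Definition pid (n : nat) : pauli n := [ffun _ => (false, false)].

Definition pmul (n : nat) (P Q : pauli n) : pauli n :=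
  [ffun q => ((P q).1 (+) (Q q).1, (P q).2 (+) (Q q).2)].

Definition pprod (n : nat) (s : seq (pauli n)) : pauli n := foldr (@pmul n) (pid n) s.

Definition bitof (i q : nat) : bool := odd (i %/ 2 ^ q).

(* Hermitian single-qubit Pauli matrices I, X, Z, Y; entry (row a, column b) *)
Definition letter_mx (C : numClosedFieldType) (l : bool * bool) (a b : bool) : C :=
  match l with
  | (false, false) => (a == b)%:R
  | (true, false)  => (a != b)%:R
  | (false, true)  => if a == b then (if a then -1 else 1) else 0
  | (true, true)   => if a == b then 0 else (if a then 'i else - 'i)
  end.

Definition pmx (C : numClosedFieldType) (n : nat) (P : pauli n) : 'M[C]_(2 ^ n) :=
  \matrix_(i, j) \prod_(q < n) letter_mx C (P q) (bitof i q) (bitof j q).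

Definition Xq (n : nat) (q : 'I_n) : pauli n := [ffun r => (r == q, false)].
Definition Zq (n : nat) (q : 'I_n) : pauli n := [ffun r => (false, r == q)].

Definition unitary_mx (C : numClosedFieldType) (N : nat) (U : 'M[C]_N) : bool :=
  U *m (map_mx Num.conj U)^T == 1%:M.

(* U P U^{-1} is proportional to the Pauli Q (Pauli matrices square to 1) *)
Definition conj_to (C : numClosedFieldType) (n : nat) (U : 'M[C]_(2 ^ n)) (P Q : pauli n) : bool :=
  is_scalar_mx (U *m pmx C P *m invmx U *m pmx C Q).

Definition clifford_mx (C : numClosedFieldType) (n : nat) (U : 'M[C]_(2 ^ n)) : bool :=
  unitary_mx U && [forall P : pauli n, [exists Q : pauli n, conj_to U P Q]].

Definition conjP (C : numClosedFieldType) (n : nat) (U : 'M[C]_(2 ^ n)) (P : pauli n) : pauli n :=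
  odflt P [pick Q | conj_to U P Q].

(* An operation: a unitary gate, or the measurement of the Hermitian Pauli
   (-1)^s * pmx P. *)
Inductive op (n : nat) (C : Type) :=
| Gate of 'M[C]_(2 ^ n)
| Meas of bool & pauli n.
Arguments Gate {n C}.
Arguments Meas {n C}.

(* a circuit: operations in circuit order, each with its level *)
Definition circuit (n : nat) (C : Type) := seq (op n C * nat).

Definition commutes (C : numClosedFieldType) (N : nat) (A B : 'M[C]_N) : bool :=
  A *m B == B *m A.

(* support of an operation: for a gate, the qubits on which it does not act
   as the identity (i.e. does not commute with X_q and Z_q); for a measured
   Pauli, the qubits where it is not the identity. *)
Definition op_support (C : numClosedFieldType) (n : nat) (o : op n C) : {set 'I_n} :=
  match o with
  | Gate U => [set q | ~~ (commutes U (pmx C (Xq q)) && commutes U (pmx C (Zq q)))]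
  | Meas _ P => [set q | P q != (false, false)]
  end.

Definition is_gate (n : nat) (C : Type) (o : op n C) : bool :=
  if o is Gate _ then true else false.

Definition well_formed (C : numClosedFieldType) (n : nat) (c : circuit n C) : bool :=
  [&& all (fun x => 0 < x.2)%N c,
      sorted leq (map snd c),
      all (fun x => if x.1 is Gate U then clifford_mx U else true) c &
      [forall i : 'I_(size c), forall j : 'I_(size c),
         ((i < j)%N && ((nth (Meas false (pid n), 0%N) c i).2 ==
                        (nth (Meas false (pid n), 0%N) c j).2)) ==>
         [disjoint op_support (nth (Meas false (pid n), 0%N) c i).1
                 & op_support (nth (Meas false (pid n), 0%N) c j).1]]].

Definition depth (n : nat) (C : Type) (c : circuit n C) : nat := \max_(x <- c) x.2.

Definition Ulev (C : numClosedFieldType) (n : nat) (c : circuit n C) (l : nat) : 'M[C]_(2 ^ n) :=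
  foldl (fun acc x => match x with
                      | (Gate U, l') => if l' == l then U *m acc else acc
                      | _ => acc end) 1%:M c.

Definition meas_list (n : nat) (C : Type) (c : circuit n C) : seq (bool * pauli n * nat) :=
  pmap (fun x => match x with (Meas s P, l) => Some (s, P, l) | _ => None end) c.

Definition nmeas (n : nat) (C : Type) (c : circuit n C) : nat := size (meas_list c).

Definition measP (n : nat) (C : Type) (c : circuit n C) (j : nat) : pauli n :=
  (nth (false, pid n, 0%N) (meas_list c) j).1.2.
Definition measL (n : nat) (C : Type) (c : circuit n C) (j : nat) : nat :=
  (nth (false, pid n, 0%N) (meas_list c) j).2.

(* projector onto the (-1)^b eigenspace of the measured operator (-1)^s P *)
Definition proj (C : numClosedFieldType) (n : nat) (s : bool) (P : pauli n) (b : bool) : 'M[C]_(2 ^ n) :=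
  (2%:R)^-1 *: (1%:M + ((-1) ^+ (s (+) b)) *: pmx C P).

(* unnormalized state after running the circuit with the prescribed outcomes;
   its squared norm is the probability of the outcome string (Born rule) *)
Fixpoint run (C : numClosedFieldType) (n : nat) (c : circuit n C) (o : seq bool)
  (psi : 'cV[C]_(2 ^ n)) : 'cV[C]_(2 ^ n) :=
  match c with
  | [::] => psi
  | (Gate U, _) :: c' => run c' o (U *m psi)
  | (Meas s P, _) :: c' => run c' (behead o) (proj C s P (head false o) *m psi)
  end.

Definition outcomes (n : nat) (C : Type) (c : circuit n C) := {ffun 'I_(nmeas c) -> bool}.

(* o is in the outcome code iff it occurs with nonzero probability for some
   input state *)
Definition outcome_code (C : numClosedFieldType) (n : nat) (c : circuit n C)
  (o : outcomes c) : Prop :=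
  exists psi : 'cV[C]_(2 ^ n), run c [seq o j | j <- enum 'I_(nmeas c)] psi != 0.

Definition oadd (m : nat) (u v : {ffun 'I_m -> bool}) : {ffun 'I_m -> bool} :=
  [ffun j => u j (+) v j].

Definition linear_code (m : nat) (O : {ffun 'I_m -> bool} -> Prop) : Prop :=
  O [ffun _ => false] /\ (forall u v, O u -> O v -> O (oadd u v)).

Definition bdot (m : nat) (u v : {ffun 'I_m -> bool}) : bool :=
  odd (\sum_(i < m) (u i && v i)).

Definition in_perp (m : nat) (O : {ffun 'I_m -> bool} -> Prop) (u : {ffun 'I_m -> bool}) : Prop :=
  forall v, O v -> bdot u v = false.

(* component with index l is the level l + 0.5, l = 0..depth *)
Definition fault (n : nat) (C : Type) (c : circuit n C) := {ffun 'I_(depth c).+1 -> pauli n}.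

(* F(u) = prod_j eta_{l_j - 0.5}(S_j^{u_j}) *)
Definition Fu (n : nat) (C : Type) (c : circuit n C) (u : outcomes c) : fault c :=
  [ffun i : 'I_(depth c).+1 =>
     pprod [seq measP c (val j) | j <- [seq j <- enum 'I_(nmeas c) | u j && (measL c j == i.+1)]]].

(* F'(u) = prod_j eta_{l_j + 0.5}(S_j^{u_j}) *)
Definition Fu' (n : nat) (C : Type) (c : circuit n C) (u : outcomes c) : fault c :=
  [ffun i : 'I_(depth c).+1 =>
     pprod [seq measP c (val j) | j <- [seq j <- enum 'I_(nmeas c) | u j && (measL c j == i)]]].

(* cumulant: for l = 1..depth, F_{l+0.5} := F_{l+0.5} . U_l F_{l-0.5} U_l^{-1} *)
Fixpoint cum_aux (C : numClosedFieldType) (n : nat) (c : circuit n C) (F : fault c) (l : nat)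
  : pauli n :=
  match l with
  | 0 => F ord0
  | l'.+1 => pmul (F (inord l)) (conjP (Ulev c l) (cum_aux F l'))
  end.

Definition cumulant (C : numClosedFieldType) (n : nat) (c : circuit n C) (F : fault c) : fault c :=
  [ffun i : 'I_(depth c).+1 => cum_aux F i].

(* back-cumulant: for l = depth..1, F_{l-0.5} := F_{l-0.5} . U_l^{-1} F_{l+0.5} U_l ;
   bcum_aux F k is the component of index depth - k *)
Fixpoint bcum_aux (C : numClosedFieldType) (n : nat) (c : circuit n C) (F : fault c) (k : nat)
  : pauli n :=
  match k with
  | 0 => F ord_max
  | k'.+1 => pmul (F (inord (depth c - k)))
                  (conjP (invmx (Ulev c (depth c - k'))) (bcum_aux F k'))
  end.

Definition back_cumulant (C : numClosedFieldType) (n : nat) (c : circuit n C) (F : fault c)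
  : fault c :=
  [ffun i : 'I_(depth c).+1 => bcum_aux F (depth c - i)].

(* Main.v *)
Require Import Defs.
From mathcomp Require Import all_boot all_order all_algebra zify ring.
Set Implicit Arguments. Unset Strict Implicit. Unset Printing Implicit Defensive.
Import Order.TTheory GRing.Theory Num.Theory.
Local Open Scope ring_scope.

Lemma bitof0 i : bitof i 0 = odd i.
Proof. by rewrite /bitof expn0 divn1. Qed.
Lemma bitofS i q : bitof i q.+1 = bitof (i %/ 2) q.
Proof. by rewrite /bitof expnS divnMA. Qed.
Lemma half_dbl j : ((j.*2) %/ 2 = j)%N.
Proof. by rewrite -muln2 mulnK. Qed.
Lemma half_dbl1 j : ((j.*2).+1 %/ 2 = j)%N.
Proof. lia. Qed.

Lemma bits_inj n i j : (i < 2 ^ n)%N -> (j < 2 ^ n)%N ->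
  (forall q, (q < n)%N -> bitof i q = bitof j q) -> i = j.
Proof.
elim: n i j => [|n IH] i j hi hj H; first by rewrite expn0 in hi hj; lia.
have h0 : odd i = odd j by rewrite -!bitof0; apply: H.
have h1 : (i %/ 2 = j %/ 2)%N.
  apply: IH; first by rewrite ltn_divLR // -expnSr.
    by rewrite ltn_divLR // -expnSr.
  by move=> q hq; rewrite -!bitofS; apply: H.
by rewrite -[i]odd_double_half -[j]odd_double_half -!divn2 h0 h1.
Qed.

Section Pauli.
Variable C : numClosedFieldType.

Definition ph (l1 l2 : bool * bool) : C :=
  match l1, l2 with
  | (true,false),(false,true) => - 'i
  | (false,true),(true,false) => 'i
  | (true,false),(true,true) => 'i
  | (true,true),(true,false) => - 'i
  | (false,true),(true,true) => - 'i
  | (true,true),(false,true) => 'i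
  | _,_ => 1 end.

Lemma ii : 'i * 'i = -1 :> C.
Proof. by rewrite -expr2 sqrCi. Qed.

Lemma letter_mul (l1 l2 : bool * bool) (a c : bool) :
  letter_mx C l1 a false * letter_mx C l2 false c + letter_mx C l1 a true * letter_mx C l2 true c
  = ph l1 l2 * letter_mx C (l1.1 (+) l2.1, l1.2 (+) l2.2) a c.
Proof.
case: l1 => [[] []]; case: l2 => [[] []]; case: a; case: c;
rewrite /letter_mx /ph /= ?(mul0r,mulr0,add0r,addr0,mul1r,mulr1,mulrN,mulNr,opprK, ii) //.
Qed.

Lemma ph_neq0 l1 l2 : ph l1 l2 != 0.
Proof.
have hi : ('i : C) != 0 by rewrite -normr_eq0 normCi oner_eq0.
by case: l1 => [[] []]; case: l2 => [[] []]; rewrite /ph ?oppr_eq0 ?oner_eq0.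
Qed.

Lemma split2 N (g : nat -> C) :
  \sum_(0 <= j < N.*2) g j = \sum_(0 <= j < N) (g (j.*2) + g (j.*2).+1).
Proof.
elim: N => [|N IH]; first by rewrite !big_geq.
rewrite doubleS !big_nat_recr //= ?IH ?addrA //; lia.
Qed.

Lemma sum_bits n (f : 'I_n -> bool -> C) :
  \sum_(j < 2 ^ n) \prod_(q < n) f q (bitof j q) = \prod_(q < n) (f q false + f q true).
Proof.
elim: n f => [|n IH] f.
  by rewrite expn0 big_ord1 !big_ord0.
rewrite -(big_mkord xpredT (fun j => \prod_(q < n.+1) f q (bitof j q))).
rewrite expnSr muln2 split2.
rewrite (eq_bigr (fun j => (f ord0 false + f ord0 true) *
     \prod_(q < n) f (lift ord0 q) (bitof j q))); last first.
  move=> j _; rewrite !big_ord_recl !bitof0 odd_double /= mulrDl; congr (_ + _).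
    by congr (_ * _); apply: eq_bigr => q _; rewrite /= bitofS half_dbl.
  by rewrite odd_double /=; congr (_ * _); apply: eq_bigr => q _; rewrite /= bitofS half_dbl1.
rewrite -mulr_sumr big_mkord (IH (fun q => f (lift ord0 q))) big_ord_recl //.
Qed.


Section PauliN.
Variable n : nat.
Implicit Types P Q R : pauli n.

Definition phs P Q : C := \prod_(q < n) ph (P q) (Q q).

Lemma phs_neq0 P Q : phs P Q != 0.
Proof. by apply/prodf_neq0 => q _; apply: ph_neq0. Qed.

Lemma pmx_mul P Q : pmx C P *m pmx C Q = phs P Q *: pmx C (pmul P Q).
Proof.
apply/matrixP => i k; rewrite !mxE.
rewrite (eq_bigr (fun j : 'I_(2 ^ n) => \prod_(q < n) (letter_mx C (P q) (bitof i q) (bitof j q) *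
   letter_mx C (Q q) (bitof j q) (bitof k q)))); last by move=> j _; rewrite !mxE -big_split.
rewrite (sum_bits (fun q b => letter_mx C (P q) (bitof i q) b * letter_mx C (Q q) b (bitof k q))).
rewrite /phs -big_split; apply: eq_bigr => q _ /=.
by rewrite letter_mul ffunE.
Qed.


Lemma pmx_pid : pmx C (pid n) = 1%:M.
Proof.
apply/matrixP => i j; rewrite !mxE.
case: (eqVneq i j) => [->|ne].
  by apply: big1 => q _; rewrite ffunE /letter_mx eqxx.
case: (boolP [exists q : 'I_n, bitof i q != bitof j q]) => [/existsP [q hq]|].
  by apply/eqP; apply/prodf_eq0; exists q => //; rewrite ffunE /letter_mx (negPf hq).
move=> /existsPn H; case/negP: ne; apply/eqP/val_inj/(@bits_inj n) => //; first exact: ltn_ord i; first exact: ltn_ord j.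
move=> q hq; move: (H (Ordinal hq)); by rewrite negbK => /eqP.
Qed.

Lemma pmx_sq P : pmx C P *m pmx C P = 1%:M.
Proof.
rewrite pmx_mul.
have -> : phs P P = 1 by apply: big1 => q _; case: (P q) => [[] []].
have -> : pmul P P = pid n by apply/ffunP => q; rewrite !ffunE !addbb.
by rewrite scale1r pmx_pid.
Qed.

Lemma pmx_unit P : pmx C P \in unitmx.
Proof. by case: (mulmx1_unit (pmx_sq P)). Qed.

Lemma pmx_tr P : \tr (pmx C P) = \prod_(q < n) (letter_mx C (P q) false false + letter_mx C (P q) true true).
Proof.
rewrite /mxtrace -(sum_bits (fun q b => letter_mx C (P q) b b)).
by apply: eq_bigr => i _; rewrite mxE.
Qed.

Lemma pmx_scalar_pid R (a : C) : a != 0 -> pmx C R = a%:M -> R = pid n.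
Proof.
move=> a0 HR; apply/ffunP => q; rewrite ffunE; apply/eqP/negPn/negP => hq.
have := congr1 mxtrace HR; rewrite pmx_tr mxtrace_scalar.
have -> : \prod_(q0 < n) (letter_mx C (R q0) false false + letter_mx C (R q0) true true) = 0.
  apply/eqP; apply/prodf_eq0; exists q => //.
  by move: hq; case: (R q) => [[] []]; rewrite /letter_mx //= ?addrN ?addr0.
move/esym/eqP; rewrite mulrn_eq0 (negPf a0) orbF expn_eq0 //.
Qed.


Local Notation M := 'M[C]_(2 ^ n).
Definition sim (A B : M) := exists2 k : C, k != 0 & A = k *: B.

Lemma sim_refl A : sim A A.
Proof. by exists 1; rewrite ?oner_eq0 ?scale1r. Qed.

Lemma sim_sym A B : sim A B -> sim B A.
Proof.
case=> k k0 ->; exists k^-1; first by rewrite invr_eq0.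
by rewrite scalerA mulVf // scale1r.
Qed.

Lemma sim_trans A B D : sim A B -> sim B D -> sim A D.
Proof.
case=> k k0 -> [l l0 ->]; exists (k * l); first by rewrite mulf_neq0.
by rewrite scalerA.
Qed.

Lemma sim_scale k A : k != 0 -> sim (k *: A) A.
Proof. by move=> k0; exists k. Qed.

Lemma simM A A' B B' : sim A A' -> sim B B' -> sim (A *m B) (A' *m B').
Proof.
case=> k k0 -> [l l0 ->]; exists (k * l); first by rewrite mulf_neq0.
by rewrite -scalemxAl -scalemxAr scalerA.
Qed.

Lemma simMl A B D : sim A B -> sim (D *m A) (D *m B).
Proof. by move=> h; apply: simM (sim_refl _) h. Qed.
Lemma simMr A B D : sim A B -> sim (A *m D) (B *m D).
Proof. by move=> h; apply: simM h (sim_refl _). Qed.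

Lemma sim_cancel T W A B : T \in unitmx -> W \in unitmx ->
  sim (T *m A *m W) (T *m B *m W) -> sim A B.
Proof.
move=> uT uW [k k0 H]; exists k => //.
have -> : A = invmx T *m (T *m A *m W *m invmx W) by rewrite mulmxK // mulKmx.
by rewrite H -scalemxAl -scalemxAr mulmxK // mulKmx.
Qed.

Lemma one_neq0 : (1%:M : M) != 0.
Proof.
apply/negP => /eqP/(congr1 mxtrace); rewrite mxtrace1 mxtrace0 => /eqP.
by rewrite pnatr_eq0 expn_eq0.
Qed.

Lemma pmx_inj P Q : sim (pmx C P) (pmx C Q) -> P = Q.
Proof.
case=> k k0 H.
have H2 : pmx C (pmul P Q) = (k / phs P Q)%:M.
  have := congr1 (mulmx^~ (pmx C Q)) H; rewrite /= -scalemxAl pmx_sq pmx_mul scalemx1 => E.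
  transitivity ((phs P Q)^-1 *: (phs P Q *: pmx C (pmul P Q))).
    by rewrite scalerA mulVf ?phs_neq0 // scale1r.
  by rewrite E -scalemx1 scalerA mulrC scalemx1.
have := pmx_scalar_pid _ H2; rewrite mulf_neq0 ?invr_eq0 ?phs_neq0 // => /(_ isT) E.
apply/ffunP => q; move: (congr1 (fun f : pauli n => f q) E); rewrite !ffunE.
by case: (P q) => [[] []]; case: (Q q) => [[] []].
Qed.

Lemma pmx_mul_sim P Q : sim (pmx C (pmul P Q)) (pmx C P *m pmx C Q).
Proof. by apply: sim_sym; rewrite pmx_mul; apply: sim_scale; apply: phs_neq0. Qed.

Definition cliff (U : M) := U \in unitmx /\ forall P, exists Q, sim (U *m pmx C P *m invmx U) (pmx C Q).

Lemma conj_to_sim (U : M) P Q : U \in unitmx -> conj_to U P Q -> sim (U *m pmx C P *m invmx U) (pmx C Q).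
Proof.
move=> uU /is_scalar_mxP [a Ha].
have E : U *m pmx C P *m invmx U = a *: pmx C Q.
  by rewrite -mul_scalar_mx -Ha -[RHS]mulmxA pmx_sq mulmx1.
exists a => //; apply/negP => /eqP a0; move: E; rewrite a0 scale0r => E.
have : pmx C P = 0.
  have -> : pmx C P = invmx U *m (U *m pmx C P *m invmx U *m U) by rewrite mulmxKV // mulKmx.
  by rewrite E mul0mx mulmx0.
move=> E2; have := pmx_sq P; rewrite E2 mul0mx => /esym/eqP; by rewrite (negPf one_neq0).
Qed.

Lemma sim_conj_to (U : M) P Q : sim (U *m pmx C P *m invmx U) (pmx C Q) -> conj_to U P Q.
Proof.
case=> k k0 E; apply/is_scalar_mxP; exists k.
by rewrite E -scalemxAl pmx_sq scalemx1.
Qed.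

Lemma conjP_sim (U : M) P : cliff U -> sim (U *m pmx C P *m invmx U) (pmx C (conjP U P)).
Proof.
case=> uU H; rewrite /conjP; case: pickP => [Q HQ|H0] /=; first exact: conj_to_sim.
case: (H P) => Q /sim_conj_to; by rewrite H0.
Qed.

Lemma invmxM' (U V : M) : U \in unitmx -> V \in unitmx -> invmx (U *m V) = invmx V *m invmx U.
Proof.
move=> uU uV; have uUV : U *m V \in unitmx by rewrite unitmx_mul uU.
have E : U *m V *m (invmx V *m invmx U) = 1%:M.
  by rewrite -mulmxA (mulmxA V) mulmxV // mul1mx mulmxV.
by rewrite -[RHS](mulKmx uUV) E mulmx1.
Qed.

Lemma cliff1 : cliff 1%:M.
Proof.
split; first exact: unitmx1.
by move=> P; exists P; rewrite invmx1 mul1mx mulmx1; apply: sim_refl.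
Qed.

Lemma cliffM U V : cliff U -> cliff V -> cliff (U *m V).
Proof.
case=> uU HU [uV HV]; split; first by rewrite unitmx_mul uU.
move=> P; case: (HV P) => Q1 h1; case: (HU Q1) => Q2 h2; exists Q2.
apply: sim_trans h2.
have -> : U *m V *m pmx C P *m invmx (U *m V) = U *m (V *m pmx C P *m invmx V) *m invmx U.
  by rewrite invmxM' // !mulmxA.
by apply: simMr; apply: simMl.
Qed.

Lemma cliffV U : cliff U -> cliff (invmx U).
Proof.
move=> cU; case: (cU) => uU HU; split; first by rewrite unitmx_inv.
have inj : injective (conjP U).
  move=> Q1 Q2 E; apply: pmx_inj.
  apply: (sim_cancel uU (W := invmx U)); first by rewrite unitmx_inv.
  apply: sim_trans (conjP_sim Q1 cU) _; rewrite E; apply: sim_sym; exact: conjP_sim.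
case: (injF_bij inj) => g _ gK.
move=> P; exists (g P); rewrite invmxK.
have h := conjP_sim (g P) cU; rewrite gK in h.
apply: sim_sym; apply: (sim_cancel uU (W := invmx U)); first by rewrite unitmx_inv.
apply: sim_trans h _; rewrite !mulmxA mulmxV // mul1mx -mulmxA mulmxV // mulmx1.
exact: sim_refl.
Qed.

Lemma clifford_cliff U : clifford_mx U -> cliff U.
Proof.
case/andP => /eqP hu /forallP H; have uU := proj1 (mulmx1_unit hu).
split => // P; case/existsP: (H P) => Q hQ; exists Q; exact: conj_to_sim.
Qed.

Lemma pmx_pmul P Q : pmx C (pmul P Q) = (phs P Q)^-1 *: (pmx C P *m pmx C Q).
Proof. by rewrite pmx_mul scalerA mulVf ?phs_neq0 // scale1r. Qed.

Lemma comm_pmul (A : M) P Q : A *m pmx C P = pmx C P *m A -> A *m pmx C Q = pmx C Q *m A ->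
  A *m pmx C (pmul P Q) = pmx C (pmul P Q) *m A.
Proof.
move=> h1 h2; rewrite pmx_pmul -scalemxAr -scalemxAl; congr (_ *: _).
by rewrite mulmxA h1 -[LHS]mulmxA h2 mulmxA.
Qed.

Lemma comm_pid (A : M) : A *m pmx C (pid n) = pmx C (pid n) *m A.
Proof. by rewrite pmx_pid mulmx1 mul1mx. Qed.

Lemma comm_support (U : M) P :
  (forall q, P q != (false, false) ->
     U *m pmx C (Xq q) = pmx C (Xq q) *m U /\ U *m pmx C (Zq q) = pmx C (Zq q) *m U) ->
  U *m pmx C P = pmx C P *m U.
Proof.
move=> H.
pose Pk k : pauli n := [ffun r : 'I_n => if (r < k)%N then P r else (false, false)].
suff: forall k, U *m pmx C (Pk k) = pmx C (Pk k) *m U.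
  have -> : P = Pk n by apply/ffunP => r; rewrite ffunE ltn_ord.
  by apply.
elim=> [|k IH].
  have -> : Pk 0%N = pid n by apply/ffunP => r; rewrite !ffunE.
  exact: comm_pid.
case: (ltnP k n) => hk; last first.
  have -> : Pk k.+1 = Pk k.
    apply/ffunP => r; rewrite !ffunE.
    have h1 : (r < k.+1)%N by apply: leq_trans (ltn_ord r) _; apply: leqW.
    have h2 : (r < k)%N by apply: leq_trans (ltn_ord r) _.
    by rewrite h1 h2.
  exact: IH.
pose q := Ordinal hk.
pose Ek := pmul (if (P q).1 then Xq q else pid n) (if (P q).2 then Zq q else pid n).
have -> : Pk k.+1 = pmul (Pk k) Ek.
  apply/ffunP => r; rewrite !ffunE /=.
  have [rk|rk|rk] := ltngtP r k.
  - have -> : (r < k.+1)%N by apply: ltnW.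
    have hrq : (r == q) = false by apply/eqP => e; move: rk; rewrite e /=; lia.
    by case: (P q) => [[] []]; rewrite /= ?ffunE ?hrq; case: (P r) => [[] []].
  - have -> : (r < k.+1)%N = false by apply/negbTE; rewrite -leqNgt.
    have hrq : (r == q) = false by apply/eqP => e; move: rk; rewrite e /=; lia.
    by case: (P q) => [[] []]; rewrite /= ?ffunE ?hrq.
  - have e : r = q by apply: val_inj.
    rewrite ?rk ?ltnSn ?ltnn e.
    by case: (P q) => [[] []]; rewrite /= ?ffunE ?eqxx.
apply: comm_pmul => //.
case: (eqVneq (P q) (false, false)) => hq.
  by rewrite /Ek hq; apply: comm_pmul; apply: comm_pid.
case: (H q hq) => hx hz.
by apply: comm_pmul; [case: ((P q).1) | case: ((P q).2)]; rewrite ?comm_pid.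
Qed.
End PauliN.
End Pauli.


Section Circ.
Variable C : numClosedFieldType.
Variable n : nat.
Local Notation M := 'M[C]_(2 ^ n).
Local Notation cir := (circuit n C).

Definition mat_of (x : op n C * nat) : M :=
  match x.1 with Gate U => U | Meas s P => (-1) ^+ s *: pmx C P end.
Definition gmat (x : op n C * nat) : M :=
  match x.1 with Gate U => U | Meas _ _ => 1%:M end.
Definition prodf (f : op n C * nat -> M) (s : cir) : M :=
  foldr (fun x acc => acc *m f x) 1%:M s.

Lemma prodf_cat f s1 s2 : prodf f (s1 ++ s2) = prodf f s2 *m prodf f s1.
Proof. by elim: s1 => [|x s1 IH] /=; rewrite ?mulmx1 // IH mulmxA. Qed.

Fixpoint sel (c : cir) (us : seq bool) : cir :=
  match c with
  | [::] => [::]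
  | x :: c' =>
    match x.1 with
    | Gate U => (Gate U, x.2) :: sel c' us
    | Meas s P => (Meas (s && head false us) (if head false us then P else pid n), x.2)
                  :: sel c' (behead us)
    end
  end.

Fixpoint Rm (c : cir) (os : seq bool) : M :=
  match c with
  | [::] => 1%:M
  | x :: c' =>
    match x.1 with
    | Gate U => Rm c' os *m U
    | Meas s P => Rm c' (behead os) *m proj C s P (head false os)
    end
  end.

Lemma run_Rm c os psi : run c os psi = Rm c os *m psi.
Proof.
elim: c os psi => [|[[U|s P] l] c IH] os psi /=; first by rewrite mul1mx.
  by rewrite IH mulmxA.
by rewrite IH mulmxA.
Qed.

Fixpoint allseq k : seq (seq bool) :=
  if k is k'.+1 then map (cons false) (allseq k') ++ map (cons true) (allseq k') else [:: [::]].

Fixpoint dot (us os : seq bool) : bool :=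
  match os with
  | [::] => false
  | o :: os' => (head false us && o) (+) dot (behead us) os'
  end.

Lemma nmeas_gate U l (c : cir) : nmeas ((Gate U, l) :: c) = nmeas c.
Proof. by []. Qed.
Lemma nmeas_meas s P l (c : cir) : nmeas ((Meas s P, l) :: c) = (nmeas c).+1.
Proof. by []. Qed.

Lemma proj_sum (s : bool) (P : pauli n) (h : bool) :
  proj C s P false + (-1) ^+ h *: proj C s P true = (-1) ^+ (s && h) *: pmx C (if h then P else pid n).
Proof.
have h2 : (2 : C) != 0 by rewrite pnatr_eq0.
apply/matrixP => i j; rewrite /proj.
case: s; case: h; rewrite /= ?pmx_pid !mxE /=; field; done.
Qed.

Lemma Tsum c us :
  \sum_(os <- allseq (nmeas c)) (-1) ^+ (dot us os) *: Rm c os = prodf mat_of (sel c us).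
Proof.
elim: c us => [|[[U|s P] l] c IH] us.
- by rewrite /= big_seq1 /= expr0 scale1r.
- rewrite nmeas_gate /=.
  rewrite (eq_bigr (fun os => ((-1) ^+ dot us os *: Rm c os) *m U)); last by move=> os _; rewrite scalemxAl.
  by rewrite -mulmx_suml IH.
- rewrite nmeas_meas /= big_cat !big_map /=.
  have E : forall b, \sum_(os <- allseq (nmeas c))
      (-1) ^+ ((head false us && b) (+) dot (behead us) os) *: (Rm c os *m proj C s P b)
      = (-1) ^+ (head false us && b) *: (prodf mat_of (sel c (behead us)) *m proj C s P b).
    move=> b; rewrite -IH mulmx_suml scaler_sumr; apply: eq_bigr => os _.
    by rewrite signr_addb -scalerA scalemxAl.
  rewrite !E andbF expr0 scale1r andbT scalemxAr -mulmxDr proj_sum.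
  by rewrite /mat_of /=.
Qed.

Lemma sel_nil_mat c : prodf mat_of (sel c [::]) = prodf gmat c.
Proof.
elim: c => [|[[U|s P] l] c IH] //=; rewrite IH // /mat_of /gmat /=.
by rewrite andbF expr0 scale1r pmx_pid.
Qed.

Lemma dot_nil os : dot [::] os = false.
Proof. by elim: os => [|o os IH] //=. Qed.

Lemma allseq_size k os : os \in allseq k -> size os = k.
Proof.
elim: k os => [|k IH] os /=; first by rewrite inE => /eqP ->.
by rewrite mem_cat => /orP [] /mapP [s hs ->] /=; rewrite IH.
Qed.

Lemma dot_sum m us os : size us = m -> size os = m ->
  dot us os = odd (\sum_(i < m) (nth false us i && nth false os i)).
Proof.
elim: m us os => [|m IH] [|a us] [|b os] //=; first by rewrite big_ord0.
move=> [hu] [ho]; rewrite big_ord_recl /= oddD oddb IH //.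
Qed.

Lemma nonzero_col (R : M) : R != 0 -> exists j, R *m delta_mx j (0 : 'I_1) != 0.
Proof.
move=> hR; case: (boolP [exists j, R *m delta_mx j (0 : 'I_1) != 0]) => [/existsP [j hj]|/existsPn H].
  by exists j.
case/negP: hR; apply/eqP/matrixP => i j; move: (H j); rewrite negbK -colE => /eqP/matrixP/(_ i 0).
by rewrite !mxE.
Qed.

Lemma perp_T (c : cir) (u : outcomes c) : in_perp (@outcome_code C n c) u ->
  prodf mat_of (sel c [seq u j | j <- enum 'I_(nmeas c)]) = prodf gmat c.
Proof.
move=> hu; rewrite -Tsum -sel_nil_mat -Tsum.
apply: eq_big_seq => os hos; rewrite dot_nil expr0.
case: (eqVneq (Rm c os) 0) => [->|hR]; first by rewrite !scaler0.
have hs := allseq_size hos.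
pose o : outcomes c := [ffun j : 'I_(nmeas c) => nth false os j].
have ho : outcome_code o.
  case: (nonzero_col hR) => j hj; exists (delta_mx j 0).
  have -> : [seq o j | j <- enum 'I_(nmeas c)] = os.
    rewrite (eq_map (fun j => ffunE _ j)) /=.
    rewrite (map_comp (nth false os) val) val_enum_ord -hs.
    exact: mkseq_nth.
  by rewrite run_Rm.
have E := hu o ho.
have -> : dot [seq u j | j <- enum 'I_(nmeas c)] os = false.
  rewrite (@dot_sum (nmeas c)); first last.
  - exact: hs.
  - by rewrite size_map size_enum_ord.
  transitivity (bdot u o); last exact: E.
  rewrite /bdot; congr odd; apply: eq_bigr => i _.
  by rewrite (nth_map i) ?size_enum_ord // nth_ord_enum ffunE.
by rewrite expr0 scale1r.
Qed.

End Circ.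


Section Struct.
Variable C : numClosedFieldType.
Variable n : nat.
Local Notation M := 'M[C]_(2 ^ n).
Local Notation cir := (circuit n C).
Local Notation el := (op n C * nat)%type.
Local Notation gmat := (@gmat C n).
Local Notation mat_of := (@mat_of C n).

Definition rr (x y : el) : bool := (x.2 == y.2) ==> [disjoint op_support x.1 & op_support y.1].

Fixpoint Mall (b : cir) : pauli n :=
  match b with
  | [::] => pid n
  | x :: b' => match x.1 with Gate _ => Mall b' | Meas _ P => pmul P (Mall b') end
  end.

Definition lvl (d : cir) (t : nat) := [seq x <- d | x.2 == t].

Definition isgc (x : el) : bool := if x.1 is Gate U then clifford_mx U else true.

Lemma disj_comm (U : M) s P : [disjoint op_support (Gate U) & op_support (Meas s P : op n C)] ->
  U *m pmx C P = pmx C P *m U.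
Proof.
move=> hd; apply: comm_support => q hq.
have hq' : q \in op_support (Meas s P : op n C) by rewrite /= inE.
have := disjointFl hd hq'; rewrite /= inE => /negbFE /andP [/eqP h1 /eqP h2].
by split.
Qed.

Lemma sgn_neq0 (s : bool) : (-1) ^+ s != 0 :> C.
Proof. by rewrite signr_eq0. Qed.

Lemma comm_sim_pmx (A B : pauli n) : sim (pmx C A *m pmx C B) (pmx C B *m pmx C A).
Proof.
rewrite !pmx_mul.
have -> : pmul B A = pmul A B by apply/ffunP => q; rewrite !ffunE addbC [X in (_, X)]addbC.
apply: (@sim_trans _ _ _ (pmx C (pmul A B))).
  exact: sim_scale _ (phs_neq0 C _ _).
apply: sim_sym; exact: sim_scale _ (phs_neq0 C _ _).
Qed.

Lemma gate_comm_Mall (U : M) (b : cir) :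
  all (fun y : el => if y.1 is Meas _ Q then U *m pmx C Q == pmx C Q *m U else true) b ->
  U *m pmx C (Mall b) = pmx C (Mall b) *m U.
Proof.
elim: b => [|[[V|s Q] l] b IH] /=; first by rewrite comm_pid.
  exact: IH.
by case/andP => /eqP h1 h2; apply: comm_pmul => //; apply: IH.
Qed.

Lemma Gc_comm (P : pauli n) (b : cir) :
  all (fun y : el => if y.1 is Gate V then V *m pmx C P == pmx C P *m V else true) b ->
  prodf gmat b *m pmx C P = pmx C P *m prodf gmat b.
Proof.
elim: b => [|[[V|s Q] l] b IH] /=; first by rewrite mulmx1 mul1mx.
  case/andP => /eqP h1 h2; rewrite /gmat /= -mulmxA h1 mulmxA IH // mulmxA //.
by move=> h; rewrite /gmat /= mulmx1 IH.
Qed.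

Lemma all_disj (x : el) (b : cir) l : x.2 == l -> all (rr x) b -> all (fun y : el => y.2 == l) b ->
  all (fun y : el => [disjoint op_support x.1 & op_support y.1]) b.
Proof.
move=> hx h1 h2; have := conj h1 h2; move/andP; rewrite -all_predI.
apply: sub_all => y /andP [] /=; rewrite /rr (eqP hx) => /implyP h /eqP e.
by apply: h; rewrite e.
Qed.

Lemma Blk (b : cir) l : all (fun y : el => y.2 == l) b -> pairwise rr b ->
  sim (prodf mat_of b) (prodf gmat b *m pmx C (Mall b)) /\
  prodf gmat b *m pmx C (Mall b) = pmx C (Mall b) *m prodf gmat b.
Proof.
elim: b => [|x b IH] /=.
  by rewrite pmx_pid mulmx1; split; [apply: sim_refl|].
case/andP => hxl hbl; case/andP => hrx hpw.
have hd := all_disj hxl hrx hbl.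
case: (IH hbl hpw) => IH1 IH2.
case: x hxl hrx hd => [[U|s P] lx] hxl hrx hd /=.
- have hc : U *m pmx C (Mall b) = pmx C (Mall b) *m U.
    apply: gate_comm_Mall; move: hd; apply: sub_all => y /=.
    by case: y => [[V|s Q] ly] //= /disj_comm ->.
  rewrite /mat_of /gmat /=; split.
    apply: sim_trans (simMr U IH1) _.
    by rewrite -mulmxA -hc mulmxA; apply: sim_refl.
  by rewrite -mulmxA hc mulmxA IH2 -mulmxA.
- have hc : prodf gmat b *m pmx C P = pmx C P *m prodf gmat b.
    apply: Gc_comm; move: hd; apply: sub_all => y /=.
    by case: y => [[V|s' Q] ly] //=; rewrite disjoint_sym => /disj_comm ->.
  rewrite /mat_of /gmat /= mulmx1; split.
    apply: sim_trans (simM IH1 (sim_scale _ (sgn_neq0 s))) _.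
    rewrite -mulmxA; apply: simMl; apply: sim_trans (comm_sim_pmx _ _) _.
    exact: sim_sym (pmx_mul_sim C _ _).
  by apply: comm_pmul.
Qed.

Definition lev_le : rel el := relpre snd leq.
Lemma lev_le_trans : transitive lev_le.
Proof. by move=> y x z; apply: leq_trans. Qed.

Lemma filter_none (a : pred el) (s : cir) : all (fun x => ~~ a x) s -> [seq x <- s | a x] = [::].
Proof. by elim: s => [|x s IH] //= /andP [/negPf -> /IH]. Qed.

Lemma split_sorted (s : cir) t : sorted lev_le s ->
  [seq x <- s | (x.2 <= t)%N] ++ [seq x <- s | (t < x.2)%N] = s.
Proof.
elim: s => [|x s IH] //= hs.
have hs' := path_sorted hs.
have hall := order_path_min lev_le_trans hs.
case: (leqP x.2 t) => h /=; first by rewrite IH.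
rewrite filter_none; last first.
  by apply: sub_all hall => y /= hy; rewrite -ltnNge; apply: leq_trans h hy.
congr (_ :: _); apply/all_filterP.
by apply: sub_all hall => y /= hy; apply: leq_trans h hy.
Qed.

Lemma prodf_split f (d : cir) t : sorted lev_le d ->
  prodf f d = prodf f [seq x <- d | (t < x.2)%N] *m prodf f [seq x <- d | (x.2 <= t)%N].
Proof. by move=> hs; rewrite -{1}(split_sorted t hs) prodf_cat. Qed.

Lemma prodf_up f (d : cir) t : sorted lev_le d ->
  prodf f [seq x <- d | (x.2 <= t.+1)%N] = prodf f (lvl d t.+1) *m prodf f [seq x <- d | (x.2 <= t)%N].
Proof.
move=> hs; rewrite (prodf_split f t (sorted_filter lev_le_trans _ hs)) -!filter_predI /lvl.
congr (prodf f _ *m prodf f _); apply: eq_filter => x /=.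
  by apply/andP/eqP => [[h1 h2]|->]; lia.
by apply/andP/idP => [[h1 h2]|h]; lia.
Qed.

Lemma prodf_dn f (d : cir) t : sorted lev_le d ->
  prodf f [seq x <- d | (t < x.2)%N] = prodf f [seq x <- d | (t.+1 < x.2)%N] *m prodf f (lvl d t.+1).
Proof.
move=> hs; rewrite (prodf_split f t.+1 (sorted_filter lev_le_trans _ hs)) -!filter_predI /lvl.
congr (prodf f _ *m prodf f _); apply: eq_filter => x /=.
  by apply/andP/idP => [[h1 h2]|h]; lia.
by apply/andP/eqP => [[h1 h2]|->]; lia.
Qed.

Lemma cliff_prodf (s : cir) : all isgc s -> cliff (prodf gmat s).
Proof.
elim: s => [|[[U|s0 P] l] s IH] /=; first by move=> _; apply: cliff1.
  by case/andP => hU hs; apply: cliffM (IH hs) (clifford_cliff hU).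
by move=> hs; rewrite /gmat /= mulmx1; apply: IH.
Qed.

Lemma unit_prodf_mat (s : cir) : all isgc s -> prodf mat_of s \in unitmx.
Proof.
elim: s => [|[[U|s0 P] l] s IH] /=; first by move=> _; apply: unitmx1.
  case/andP => hU hs; rewrite unitmx_mul IH //=.
  by case: (clifford_cliff hU).
move=> hs; rewrite unitmx_mul IH //= /mat_of /= unitmxZ ?pmx_unit //.
by apply: unitrX; apply: unitrN1.
Qed.

Lemma Ulev_fold (d : cir) t (acc : M) :
  foldl (fun acc x => match x with
                      | (Gate U, l') => if l' == t then U *m acc else acc
                      | _ => acc end) acc d = prodf gmat (lvl d t) *m acc.
Proof.
elim: d acc => [|[[U|s P] l] d IH] acc /=; first by rewrite mul1mx.
  by rewrite IH; case: (l == t) => //=; rewrite -mulmxA.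
by rewrite IH; case: (l == t) => //=; rewrite /gmat /= mulmx1.
Qed.

Lemma Ulev_prodf (d : cir) t : Ulev d t = prodf gmat (lvl d t).
Proof. by rewrite /Ulev Ulev_fold mulmx1. Qed.

Lemma all_filterW (a p : pred el) (s : cir) : all a s -> all a [seq x <- s | p x].
Proof. by elim: s => [|x s IH] //= /andP [h1 h2]; case: (p x) => /=; rewrite ?h1 IH. Qed.

Lemma Blk_lvl (d : cir) t : pairwise rr d ->
  sim (prodf mat_of (lvl d t)) (pmx C (Mall (lvl d t)) *m prodf gmat (lvl d t)) /\
  prodf gmat (lvl d t) *m pmx C (Mall (lvl d t)) = pmx C (Mall (lvl d t)) *m prodf gmat (lvl d t).
Proof.
move=> hpw; have [h1 h2] := @Blk (lvl d t) t (filter_all _ _) (pairwise_filter _ hpw).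
by split => //; rewrite -h2.
Qed.

Lemma cum_sim (c d : cir) (F : fault c)
  (hs : sorted lev_le d) (hpos : all (fun x : el => (0 < x.2)%N) d) (hg : all isgc d)
  (hpw : pairwise rr d)
  (hU : forall t, Ulev c t = prodf gmat (lvl d t))
  (hF : forall i : 'I_(depth c).+1, F i = Mall (lvl d i)) :
  forall t, (t <= depth c)%N ->
  sim (pmx C (cum_aux F t) *m prodf gmat [seq x <- d | (x.2 <= t)%N])
      (prodf mat_of [seq x <- d | (x.2 <= t)%N]).
Proof.
elim=> [|t IH] ht.
  have e0 : [seq x <- d | (x.2 <= 0)%N] = [::].
    by apply: filter_none; apply: sub_all hpos => x /=; rewrite -ltnNge.
  have e1 : lvl d 0 = [::].
    by apply: filter_none; apply: sub_all hpos => x /=; rewrite lt0n.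
  by rewrite /= hF /= e1 e0 /= pmx_pid mulmx1; apply: sim_refl.
have ht' : (t <= depth c)%N by apply: ltnW.
rewrite /= hF inordK ?ltnS // hU !prodf_up //.
have [B1 B2] := Blk_lvl t.+1 hpw.
set L := lvl d t.+1; set G := prodf gmat L; set Mt := Mall L.
set K := cum_aux F t; set Wt := prodf gmat _; set Tt := prodf mat_of _.
have cG : cliff G by apply: cliff_prodf; apply: all_filterW.
have uG : G \in unitmx by case: cG.
apply: (@sim_trans _ _ _ (pmx C Mt *m G *m (pmx C K *m Wt))).
  apply: sim_trans (simMr _ (pmx_mul_sim C _ _)) _.
  have -> : pmx C Mt *m G *m (pmx C K *m Wt) = pmx C Mt *m (G *m pmx C K *m invmx G) *m (G *m Wt).
    by rewrite !mulmxA mulmxKV.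
  by apply: simMr; apply: simMl; apply: sim_sym; apply: conjP_sim.
apply: sim_trans (simMl _ (IH ht')) _.
by apply: simMr; apply: sim_sym.
Qed.

Lemma bcum_sim (c d : cir) (F : fault c)
  (hs : sorted lev_le d) (hle : all (fun x : el => (x.2 <= depth c)%N) d) (hg : all isgc d)
  (hpw : pairwise rr d)
  (hU : forall t, Ulev c t = prodf gmat (lvl d t))
  (hF : forall i : 'I_(depth c).+1, F i = Mall (lvl d i.+1)) :
  forall k, (k <= depth c)%N ->
  sim (prodf mat_of [seq x <- d | (depth c - k < x.2)%N] *m pmx C (bcum_aux F k))
      (prodf gmat [seq x <- d | (depth c - k < x.2)%N]).
Proof.
elim=> [|k IH] hk.
  have e0 : [seq x <- d | (depth c - 0 < x.2)%N] = [::].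
    by apply: filter_none; apply: sub_all hle => x /=; rewrite subn0 -leqNgt.
  have e1 : lvl d (depth c).+1 = [::].
    apply: filter_none; apply: sub_all hle => x /= h; apply/eqP => e.
    by move: h; rewrite e ltnn.
  by rewrite /= hF /= e1 e0 /= pmx_pid mul1mx; apply: sim_refl.
pose t := (depth c - k.+1)%N.
have et : (depth c - k = t.+1)%N by rewrite /t; lia.
have hk' : (k <= depth c)%N by apply: ltnW.
have IH' := IH hk'; rewrite et in IH'.
rewrite /= -/t hF inordK; last by rewrite ltnS /t leq_subr.
rewrite et hU (prodf_dn mat_of t hs) (prodf_dn gmat t hs).
have [B1 B2] := Blk_lvl t.+1 hpw.
set L := lvl d t.+1; set G := prodf gmat L; set Mt := Mall L.
set B := bcum_aux F k; set Wd := prodf gmat _; set Td := prodf mat_of _.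
have cG : cliff G by apply: cliff_prodf; apply: all_filterW.
have uG : G \in unitmx by case: cG.
apply: (@sim_trans _ _ _ (Td *m (pmx C Mt *m G) *m (pmx C Mt *m (invmx G *m pmx C B *m invmx (invmx G))))).
  apply: simM; first exact: simMl.
  apply: sim_trans (pmx_mul_sim C _ _) _; apply: simMl; apply: sim_sym; apply: conjP_sim.
  exact: cliffV.
have -> : Td *m (pmx C Mt *m G) *m (pmx C Mt *m (invmx G *m pmx C B *m invmx (invmx G)))
          = Td *m pmx C B *m G.
  rewrite invmxK -B2 !mulmxA -(mulmxA _ (pmx C Mt) (pmx C Mt)) pmx_sq mulmx1.
  by rewrite -(mulmxA _ G (invmx G)) mulmxV // mulmx1.
by apply: simMr.
Qed.

Lemma cum_eq (c d : cir) (F F' : fault c)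
  (hs : sorted lev_le d) (hpos : all (fun x : el => (0 < x.2)%N) d)
  (hle : all (fun x : el => (x.2 <= depth c)%N) d) (hg : all isgc d)
  (hpw : pairwise rr d)
  (hU : forall t, Ulev c t = prodf gmat (lvl d t))
  (hF : forall i : 'I_(depth c).+1, F i = Mall (lvl d i.+1))
  (hF' : forall i : 'I_(depth c).+1, F' i = Mall (lvl d i))
  (hT : prodf mat_of d = prodf gmat d) :
  back_cumulant F = cumulant F'.
Proof.
apply/ffunP => i; rewrite !ffunE.
have hi : (i <= depth c)%N by rewrite -ltnS.
have h1 := bcum_sim hs hle hg hpw hU hF (leq_subr i (depth c)).
rewrite subKn // in h1.
have h2 := cum_sim hs hpos hg hpw hU hF' hi.
apply: (@pmx_inj C).
have uT : prodf mat_of [seq x <- d | (i < x.2)%N] \in unitmx.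
  by apply: unit_prodf_mat; apply: all_filterW.
have uW : prodf gmat [seq x <- d | (x.2 <= i)%N] \in unitmx.
  by case: (cliff_prodf (all_filterW (fun x : el => (x.2 <= i)%N) hg)).
apply: (sim_cancel uT uW).
apply: sim_trans (simMr _ h1) _.
rewrite -prodf_split // -hT (prodf_split _ i hs) -mulmxA.
by apply: simMl; apply: sim_sym.
Qed.

End Struct.


Section Glue.
Variable C : numClosedFieldType.
Variable n : nat.
Local Notation M := 'M[C]_(2 ^ n).
Local Notation cir := (circuit n C).
Local Notation el := (op n C * nat)%type.
Local Notation gmat := (@gmat C n).
Local Notation mat_of := (@mat_of C n).
Local Notation isgc := (@isgc C n).
Local Notation rr := (@rr C n).

Lemma sel_snd (c : cir) us : [seq x.2 | x <- sel c us] = [seq x.2 | x <- c].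
Proof. by elim: c us => [|[[U|s P] l] c IH] us //=; rewrite IH. Qed.

Lemma sel_gmat (c : cir) us : prodf gmat (sel c us) = prodf gmat c.
Proof. by elim: c us => [|[[U|s P] l] c IH] us //=; rewrite IH. Qed.

Lemma sel_isgc (c : cir) us : all isgc c -> all isgc (sel c us).
Proof.
elim: c us => [|[[U|s P] l] c IH] us //=; first by case/andP => h1 h2; rewrite h1 IH.
by move=> h; apply: IH.
Qed.

Lemma sel_lvl_gmat (c : cir) us t : prodf gmat (lvl (sel c us) t) = prodf gmat (lvl c t).
Proof.
elim: c us => [|[[U|s P] l] c IH] us //=; rewrite /lvl /=; case: (l == t) => //=;
by rewrite -!/(lvl _ t) IH.
Qed.

Lemma supp_pid s : op_support (Meas s (pid n) : op n C) = set0.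
Proof. by apply/setP => q; rewrite !inE ffunE eqxx. Qed.

Lemma sel_all (a b : pred el) (c : cir) us :
  (forall y y' : el, y'.2 = y.2 -> op_support y'.1 \subset op_support y.1 -> a y -> b y') ->
  all a c -> all b (sel c us).
Proof.
move=> H; elim: c us => [|[[U|s P] l] c IH] us //= /andP [h1 h2].
  by rewrite IH // andbT; exact: (H (Gate U, l) (Gate U, l) erefl (subxx _) h1).
rewrite IH // andbT.
apply: (H (Meas s P, l) (Meas (s && head false us) (if head false us then P else pid n), l) erefl _ h1).
case: (head false us); first exact: subxx.
by rewrite supp_pid sub0set.
Qed.

Lemma rr_sub (x y x' y' : el) : x'.2 = x.2 -> y'.2 = y.2 ->
  op_support x'.1 \subset op_support x.1 -> op_support y'.1 \subset op_support y.1 ->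
  rr x y -> rr x' y'.
Proof.
move=> e1 e2 s1 s2; rewrite /rr e1 e2 => /implyP h; apply/implyP => /h hd.
by apply: disjointWl s1 _; apply: disjointWr s2 _.
Qed.

Lemma sel_pairwise (c : cir) us : pairwise rr c -> pairwise rr (sel c us).
Proof.
elim: c us => [|[[U|s P] l] c IH] us //=; rewrite ?pairwise_cons => /andP [h1 h2].
  rewrite IH // andbT; move: h1; apply: sel_all => y y' e s'.
  by apply: rr_sub.
rewrite IH // andbT; move: h1; apply: sel_all => y y' e s'.
apply: rr_sub => //.
case: (head false us); first exact: subxx.
by rewrite supp_pid sub0set.
Qed.

Lemma all_le_depth (c : cir) : all (fun x : el => (x.2 <= depth c)%N) c.
Proof.
rewrite /depth; elim: c => [|x c IH] //=; rewrite big_cons leq_maxl /=.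
by apply: sub_all IH => y /= h; apply: leq_trans h (leq_maxr _ _).
Qed.

Lemma wf_pairwise (c : cir) :
  [forall i : 'I_(size c), forall j : 'I_(size c),
         ((i < j)%N && ((nth (Meas false (pid n), 0%N) c i).2 ==
                        (nth (Meas false (pid n), 0%N) c j).2)) ==>
         [disjoint op_support (nth (Meas false (pid n), 0%N) c i).1
                 & op_support (nth (Meas false (pid n), 0%N) c j).1]] ->
  pairwise rr c.
Proof.
move=> /forallP H; apply/(pairwiseP (Meas false (pid n), 0%N)) => i j hi hj hij.
have := forallP (H (Ordinal hi)) (Ordinal hj); rewrite /= hij /=.
by [].
Qed.

Lemma pmul_pid_l (P : pauli n) : pmul (pid n) P = P.
Proof. by apply/ffunP => q; rewrite !ffunE /=; case: (P q). Qed.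

Lemma Mall_sel (c : cir) us t :
  Mall (lvl (sel c us) t) = pprod [seq y.1.1.2 | y <- zip (meas_list c) us & y.2 && (y.1.2 == t)].
Proof.
elim: c us => [|[[U|s P] l] c IH] us /=; first by case: us.
  by rewrite /lvl /=; case: (l == t) => /=; rewrite -/(lvl _ t) IH.
case: us => [|h us] /=.
  rewrite /lvl /=; case: (l == t) => /=; rewrite -/(lvl _ t) IH /=.
  - by case: (meas_list c) => [|y ml] /=; rewrite pmul_pid_l.
  - by case: (meas_list c).
rewrite /lvl /=; case: (l == t) => /=; rewrite -/(lvl _ t) IH /=; rewrite ?andbT ?andbF //.
by case: h => //=; rewrite pmul_pid_l.
Qed.

Lemma zip_nth (A : Type) (x0 : A) (s : seq A) (bs : seq bool) : size bs = size s ->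
  zip s bs = [seq (nth x0 s k, nth false bs k) | k <- iota 0 (size s)].
Proof.
move=> hs; apply: (@eq_from_nth _ (x0, false)).
  by rewrite size_zip size_map size_iota hs minnn.
move=> k; rewrite size_zip hs minnn => hk.
by rewrite nth_zip ?hs // (nth_map 0%N) ?size_iota // nth_iota.
Qed.

Lemma Fu_list (c : cir) (u : outcomes c) t :
  [seq measP c (val j) | j <- [seq j <- enum 'I_(nmeas c) | u j && (measL c j == t)]]
  = [seq y.1.1.2 | y <- zip (meas_list c) [seq u j | j <- enum 'I_(nmeas c)] & y.2 && (y.1.2 == t)].
Proof.
set us := [seq u j | j <- enum 'I_(nmeas c)].
have hs : size us = size (meas_list c) by rewrite size_map size_enum_ord.
transitivity [seq measP c k | k <- [seq val j | j <- [seq j <- enum 'I_(nmeas c) | u j && (measL c j == t)]]].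
  exact: (map_comp (measP c) val _).
rewrite (zip_nth (false, pid n, 0%N) hs) [in RHS]filter_map -[in RHS]map_comp.
have -> : [seq j <- enum 'I_(nmeas c) | u j && (measL c j == t)] =
          filter (preim val (fun k => nth false us k && (measL c k == t))) (enum 'I_(nmeas c)).
  apply: eq_filter => j /=.
  by rewrite /us (nth_map j) ?size_enum_ord // nth_ord_enum.
rewrite -filter_map val_enum_ord.
by [].
Qed.

End Glue.

Theorem mainTheorem16 (C : numClosedFieldType) (n : nat) (c : circuit n C) :
  well_formed c ->
  linear_code (@outcome_code C n c) ->
  forall u : outcomes c, in_perp (@outcome_code C n c) u ->
  back_cumulant (@Fu n C c u) = cumulant (@Fu' n C c u).
Proof.
move=> wf _ u hu.
case/and4P: wf => hpos hsort hgate hdisj.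
set us := [seq u j | j <- enum 'I_(nmeas c)].
pose d := sel c us.
have hs : sorted (@lev_le C n) d by rewrite /lev_le -sorted_map sel_snd.
have hpos' : all (fun x : op n C * nat => (0 < x.2)%N) d.
  have : all (fun l => (0 < l)%N) [seq x.2 | x <- d] by rewrite sel_snd all_map.
  by rewrite all_map.
have hle : all (fun x : op n C * nat => (x.2 <= depth c)%N) d.
  have : all (fun l => (l <= depth c)%N) [seq x.2 | x <- d] by rewrite sel_snd all_map; apply: all_le_depth.
  by rewrite all_map.
have hg : all (@isgc C n) d by apply: sel_isgc.
have hpw : pairwise (@rr C n) d by apply: sel_pairwise; apply: wf_pairwise.
have hU : forall t, Ulev c t = prodf (@gmat C n) (lvl d t).
  by move=> t; rewrite Ulev_prodf sel_lvl_gmat.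
have hF : forall i : 'I_(depth c).+1, Fu u i = Mall (lvl d i.+1).
  by move=> i; rewrite ffunE Mall_sel -Fu_list.
have hF' : forall i : 'I_(depth c).+1, Fu' u i = Mall (lvl d i).
  by move=> i; rewrite ffunE Mall_sel -Fu_list.
have hT : prodf (@mat_of C n) d = prodf (@gmat C n) d.
  by rewrite /d perp_T // sel_gmat.
exact: (cum_eq hs hpos' hle hg hpw hU hF hF' hT).
Qed.
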